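(* Let $V\subset\mathbb{R}^d$ be a finite antichain, $p\in S_V$, $v\in D_p$ with $v_i=p_i$, and assume $v$ is not an $i$-witness for $p$. Then either $p$ is not a characteristic point or $V$ is degenerate.
   Context: For $x,y\in\mathbb{R}^d$, $x\le y$ (dominance order) means $x_i\le y_i$ for all $i$; $y\rhd x$ means $y_i>x_i$ for all $i$; $y\rhd_i x$ means $y_i=x_i$ and $y_j>x_j$ for all $j\neq i$. $V\subset\mathbb{R}^d$ is a finite antichain in the dominance order (elements are called minima). The orthogonal surface $S_V$ is the topological boundary of $\langle V\rangle=\{x: x\ge v\text{ for some }v\in V\}$; equivalently $p\in S_V$ iff there is $v\in V$ with $v\le p$ and no $w\in V$ with $p\rhd w$. For $p\in S_V$, $D_p=\{v\in V:v\le p\}$ and for $v\in D_p$, $T_p(v)=\{i: p_i=v_i\}$. For $p\in S_V$, a minimum $v\in D_p$ is an $i$-witness for $p$ if there is $q\in S_V$ with $v\le p\le q$ and $q\rhd_i v$. Flats: $U_i(v)=\{p\in S_V: p\rhd_i v\}$; for $v,w\in V$ put $v\sim_i w$ iff $U_i(v)\cap U_i(w)\neq\emptyset$, and let $\sim_i^c$ be the reflexive–transitive closure; the $i$-flat of $v$ is $F_i(v)=\overline{\bigcup_{w\sim_i^c v}U_i(w)}$ (topological closure), and an $i$-flat is any set of this form. A characteristic point is a point of $S_V$ that lies in some $i$-flat for every $i\in\{1,\dots,d\}$. $V$ is degenerate if there exist a characteristic point $p$, minima $x,u,v\in D_p$ and coordinates $i\neq j$ with $u_i<v_i=x_i=p_i$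 and $v_j<u_j=x_j=p_j$; otherwise $V$ is non-degenerate. *)

(* Defs.v *)
(* Points of R^d are row vectors 'rV[R]_d, whose
   topology is the usual (product / sup-norm) topology of R^d. *)
From HB Require Import structures.
From mathcomp Require Import all_boot all_order all_algebra.
From mathcomp Require Import all_classical all_reals all_analysis.
From Stdlib Require Import Relations.
Import numFieldTopology.Exports numFieldNormedType.Exports.
Set Implicit Arguments. Unset Strict Implicit. Unset Printing Implicit Defensive.
Import Order.TTheory GRing.Theory Num.Theory.
Local Open Scope classical_set_scope.
Local Open Scope ring_scope.

Section OrthSurf.
Variables (R : realType) (d : nat).
Notation pt := 'rV[R]_d.
Definition pcoord (x : pt) (i : 'I_d) : R := x ord0 i.

Definition dle (x y : pt) : Prop := forall i, pcoord x i <= pcoord y i.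
Definition dgt (y x : pt) : Prop := forall i, pcoord x i < pcoord y i.
Definition dgt_i (i : 'I_d) (y x : pt) : Prop :=
  pcoord y i = pcoord x i /\ forall j, j != i -> pcoord x j < pcoord y j.

Definition antichain (V : set pt) : Prop :=
  forall x y, V x -> V y -> dle x y -> x = y.

Variable V : set pt.

(* orthogonal surface S_V (characterization given in the paper) *)
Definition surf : set pt :=
  [set p | (exists v, V v /\ dle v p) /\ ~ (exists w, V w /\ dgt p w)].

Definition Dp (p : pt) : set pt := [set v | V v /\ dle v p].

Definition Tp (p v : pt) : set 'I_d := [set i | pcoord p i = pcoord v i].

Definition witness (i : 'I_d) (p v : pt) : Prop :=
  Dp p v /\ exists q, surf q /\ dle v p /\ dle p q /\ dgt_i i q v.

Definition Uflat (i : 'I_d) (v : pt) : set pt := [set p | surf p /\ dgt_i i p v].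

Definition sim (i : 'I_d) (v w : pt) : Prop :=
  V v /\ V w /\ (Uflat i v `&` Uflat i w) !=set0.

Definition simc (i : 'I_d) : relation pt := clos_refl_trans pt (sim i).

Definition flat (i : 'I_d) (v : pt) : set pt :=
  closure (T := 'rV[R]_d) [set p | exists w, simc i w v /\ Uflat i w p].

Definition is_flat (i : 'I_d) (F : set pt) : Prop := exists v, V v /\ F = flat i v.

Definition characteristic (p : pt) : Prop :=
  surf p /\ forall i : 'I_d, exists F, is_flat i F /\ F p.

Definition degenerate : Prop :=
  exists p x u v (i j : 'I_d),
    [/\ characteristic p, Dp p x, Dp p u, Dp p v & i != j] /\
    (pcoord u i < pcoord v i /\ pcoord v i = pcoord x i /\ pcoord x i = pcoord p i) /\
    (pcoord v j < pcoord u j /\ pcoord u j = pcoord x j /\ pcoord x j = pcoord p j).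

End OrthSurf.

(* Main.v *)
Require Import Defs.
From HB Require Import structures.
From mathcomp Require Import all_boot all_order all_algebra.
From mathcomp Require Import all_classical all_reals all_analysis.
From mathcomp Require Import lra.
From Stdlib Require Import Relations.
Import numFieldTopology.Exports numFieldNormedType.Exports.
Import Order.TTheory GRing.Theory Num.Theory.
Local Open Scope classical_set_scope.

Local Open Scope ring_scope.

Lemma seq_gap (R : realType) (s : seq R) :
  exists2 e : R, 0 < e & forall x, x \in s -> x != 0 -> e <= `|x|.
Proof.
elim: s => [|x s [e e0 He]]; first by exists 1.
case: (eqVneq x 0) => [->|xn0].
- exists e => // y; rewrite inE => /orP[/eqP->|ys]; [rewrite eqxx //|exact: He].
- exists (Order.min e `|x|); first by rewrite lt_min e0 normr_gt0 xn0.
  move=> y; rewrite inE => /orP[/eqP->|ys] yn0; first by rewrite ge_min lexx orbT.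
  by rewrite ge_min He.
Qed.

Lemma V_gap (R : realType) d (V : set 'rV[R]_d) (p : 'rV[R]_d) :
  finite_set V -> exists2 e : R, 0 < e & forall w m, V w ->
    pcoord w m != pcoord p m -> e <= `|pcoord w m - pcoord p m|.
Proof.
move/finite_seqP => [s ->].
have [e e0 He] := @seq_gap R [seq pcoord w m - pcoord p m | w <- s, m <- enum 'I_d].
exists e => // w m /= ws ne; apply: He; last by rewrite subr_eq0.
by apply/allpairsP; exists (w, m) => /=; rewrite mem_enum.
Qed.

Lemma simc_V (R : realType) d (V : set 'rV[R]_d) i w v0 :
  simc V i w v0 -> V v0 -> V w.
Proof.
elim => [x y [Vx _]|x|x y z _ IH1 _ IH2] //; auto.
Qed.

Lemma gap_lt (R : realType) (a b e : R) :
  (a != b -> e <= `|a - b|) -> `|a - b| < e -> a = b.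
Proof.
case: (eqVneq a b) => // _ H1 H2; have := H1 isT; lra.
Qed.

Theorem lemma4p7 (R : realType) (d : nat) (V : set 'rV[R]_d)
  (Vfin : finite_set V) (Vanti : antichain V)
  (p v : 'rV[R]_d) (i : 'I_d) :
  surf V p -> Dp V p v -> pcoord v i = pcoord p i -> ~ witness V i p v ->
  ~ characteristic V p \/ degenerate V.
Proof.
move=> Sp Dv vi nw.
have [e e0 He] := @V_gap R d V p Vfin.
case: (pselect (characteristic V p)) => [Cp|]; last by left.
right.
case: (pselect (exists w', [/\ Dp V p w', pcoord w' i < pcoord p i &
   forall m, m != i -> pcoord w' m = pcoord p m -> pcoord v m = pcoord p m]))
   => [[w' [Dw' w'i Hw']]|nobad]; last first.
  exfalso; apply: nw.
  have [Vv dvp] := Dv.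
  pose q : 'rV[R]_d := \row_m (if (m != i) && (pcoord v m == pcoord p m)
                                then pcoord p m + e else pcoord p m).
  have qE m : pcoord q m = (if (m != i) && (pcoord v m == pcoord p m)
                                then pcoord p m + e else pcoord p m).
    by rewrite /pcoord mxE.
  have pq : dle p q by move=> m; rewrite qE; case: ifP => _; lra.
  split => //; exists q; split; last first.
    split => //; split => //; split; first by rewrite qE eqxx /= vi.
    move=> m mi; rewrite qE mi /=; case: eqP => h.
      lra.
    by rewrite lt_neqAle (dvp m) andbT; apply/eqP.
  split; first by exists v; split => // m; apply: le_trans (dvp m) (pq m).
  move=> [w'' [Vw'' hd]]; apply: nobad; exists w''; split.
  - split => // m; have := hd m; rewrite qE; case: ifP => _ h; last by apply: ltW.
    case: (lerP (pcoord w'' m) (pcoord p m)) => // h2.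
    have := He w'' m Vw''; rewrite gt_eqF //= => /(_ isT).
    rewrite ger0_norm; lra.
  - by have := hd i; rewrite qE eqxx.
  - move=> m mi eqm; have := hd m; rewrite qE mi /=; case: eqP => // _.
    by rewrite eqm ltxx.
have [F [[v0 [Vv0 ->]] Fp]] := Cp.2 i.
have [r [[w [sw [Sr [ri rw]]]] br]] := Fp (ball p e) (@nbhsx_ballx _ _ p e e0).
have Vw : V w by apply: simc_V sw Vv0.
have bd m : `|pcoord p m - pcoord r m| < e.
  by case: br => _ H; have := H ord0 m; rewrite /ball.
have wi : pcoord w i = pcoord p i.
  apply: gap_lt (He w i Vw) _; rewrite -ri distrC; exact: bd.
have wle : dle w p.
  move=> m; case: (eqVneq m i) => [->|mi]; first by rewrite wi.
  have h1 := rw m mi; have h2 := bd m; rewrite ltr_norml in h2.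
  case: (lerP (pcoord w m) (pcoord p m)) => // h3.
  have := He w m Vw; rewrite gt_eqF //= => /(_ isT).
  rewrite ger0_norm; lra.
have [m hm] : exists m, pcoord r m <= pcoord w' m.
  apply: contrapT => hn; apply: Sr.2; exists w'; split; first by case: Dw'.
  move=> m; rewrite ltNge; apply/negP => h; apply: hn; by exists m.
have mi : m != i.
  apply/eqP => mi; subst m; move: hm; rewrite ri wi; lra.
have w'm : pcoord w' m = pcoord p m.
  have h1 := Dw'.2 m; have h2 := bd m; rewrite ltr_norml in h2.
  apply: gap_lt (He w' m Dw'.1) _.
  rewrite ler0_norm; lra.
have vm := Hw' m mi w'm.
exists p, v, w', w, i, m; split; first by split => //; rewrite eq_sym.
split.
  split; first by rewrite wi.
  by split; [rewrite wi vi|].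
split; first by have := rw m mi; lra.
by rewrite w'm vm.
Qed.
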